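(* Let $N$ be the generalised Cartan matrix of type $A_r$ ($r\ge1$) or $A^{(1)}_{r-1}$ ($r\ge2$), let $A=[A_{ij}]$ be a solution matrix of $N$, and let $\mathfrak h$, $\alpha_i$, $Z$, $\mathcal A$, $v_1,\dots,v_r$ be as in the context, with $F:\mathfrak h\to\mathrm{Der}(\mathcal A)$ a Lie algebra homomorphism satisfying $\ker F=Z$ and $F(H)(v_i)=\alpha_i(H)v_i$. Then there exist unique $\delta_1,\dots,\delta_r\in\mathrm{Im}\,F$ with $\alpha_i(\delta_j)=A_{ij}$ for all $i,j$; setting $\delta_{-i}=\frac{1}{A_{ii}}\bigl(-F(H_i)+\frac{1}{A_{ii}}\delta_i\bigr)$, the elements $\mathbf X_i=v_i\delta_i$, $\mathbf X_{-i}=v_i^{-1}\delta_{-i}$ satisfy $[\mathbf X_i,\mathbf X_{-i}]=F(H_i)$ and $[\mathbf X_i,\mathbf X_{-j}]=0$ for $i\ne j$; hence $F(H_a)$, $\mathbf X_{\pm i}$ satisfy all the defining relations (a)–(e) of $\hat{\mathfrak g}(N)$ (Problem 1 has a solution).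
   Context: The generalised Cartan matrix of type $A_r$ ($r\ge1$) is the $r\times r$ matrix $N=[n(i,j)]$ with $2$ on the diagonal, $-1$ in positions $(i,i\pm1)$ and $0$ elsewhere; that of type $A^{(1)}_1$ is $\begin{pmatrix}2&-2\\-2&2\end{pmatrix}$; that of type $A^{(1)}_{r-1}$ ($r\ge3$) has $2$ on the diagonal, $-1$ in positions $(i,i\pm1)$ and $(1,r),(r,1)$, $0$ elsewhere. A solution matrix of $N$ is an $r\times r$ complex matrix $A=[A_{ij}]$ with all $A_{ii}\ne0$ such that $A'=[A_{ij}/A_{jj}]$ satisfies: $A'_{ij}\in\{0,-1\}$ for $i\ne j$; $A'_{ij}+A'_{ji}=n(j,i)$; and if $A'_{ij}=-1$ then the $i$-th row and $j$-th column of $A'$ have no other entries $-1$. Let $s$ be the corank of $N$ ($s=0$ for $A_r$, $s=1$ for $A^{(1)}_{r-1}$), $\mathfrak h$ the complex vector space with basis $H_1,\dots,H_{r+s}$, $\alpha_1,\dots,\alpha_r\in\mathfrak h^*$ linearly independent with $\alpha_j(H_i)=n(i,j)$ ($1\le i,j\le r$), and $Z=\bigcap_i\ker\alpha_i$. Since $\ker F\subseteq Z$, each $\alpha_i$ induces a linear form on $\mathrm{Im}\,F$ via $\alpha_i(F(H))=\alpha_i(H)$. $\mathcal A$ is a complex commutative algebra, $\mathrm{Der}(\mathcal A)$ its Lie algebra of derivations; for $a\in\mathcal A$, $D\in\mathrm{Der}(\mathcal A)$, $aD$ is $b\mapsto aD(b)$; $v_1,\dots,v_r\in\mathcal A$ are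 invertible. The defining relations of $\hat{\mathfrak g}(N)$, for $\mathbf H_a=F(H_a)$: (a) $[\mathbf H_a,\mathbf H_b]=0$; (b) $[\mathbf X_i,\mathbf X_{-i}]=\mathbf H_i$, $[\mathbf X_i,\mathbf X_{-j}]=0$ ($i\ne j$); (c) $[\mathbf H_a,\mathbf X_{\pm j}]=\pm\alpha_j(H_a)\mathbf X_{\pm j}$; (d) $\mathrm{ad}(\mathbf X_i)^{1-n(i,j)}(\mathbf X_j)=0$ ($i\ne j$); (e) $\mathrm{ad}(\mathbf X_{-i})^{1-n(i,j)}(\mathbf X_{-j})=0$ ($i\ne j$). *)

(* Defs.v *)
From HB Require Import structures.
From mathcomp Require Import all_boot all_order all_algebra.
From mathcomp Require Import complex.
From mathcomp Require Import reals.
Set Implicit Arguments. Unset Strict Implicit. Unset Printing Implicit Defensive.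
Import Order.TTheory GRing.Theory Num.Theory.
Local Open Scope ring_scope.

(* Generalised Cartan matrices, indices 0-based: i, j : 'I_r. *)
Definition cartanA (r : nat) (i j : 'I_r) : int :=
  if i == j then (2 : int)
  else if (i.+1 == j :> nat) || (j.+1 == i :> nat) then (-1 : int) else (0 : int).

Definition cartanA1 (r : nat) (i j : 'I_r) : int :=
  if i == j then (2 : int)
  else if r == 2%N then (-2 : int)
  else if [|| (i.+1 == j :> nat), (j.+1 == i :> nat),
             ((i == 0 :> nat) && (j == r.-1 :> nat)) |
             ((j == 0 :> nat) && (i == r.-1 :> nat))]
       then (-1 : int) else (0 : int).

(* aff = false : type A_r (corank s = 0); aff = true : type A^(1)_(r-1) (s = 1) *)
Definition cartan (aff : bool) (r : nat) : 'I_r -> 'I_r -> int :=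
  if aff then @cartanA1 r else @cartanA r.
Arguments cartan aff r : clear implicits.

Definition solution_matrix (K : fieldType) (r : nat)
    (N : 'I_r -> 'I_r -> int) (A : 'M[K]_r) : Prop :=
  let A' := fun i j => A i j / A j j in
  (forall i, A i i != 0) /\
  (forall i j, i != j -> A' i j = 0 \/ A' i j = -1) /\
  (forall i j, i != j -> A' i j + A' j i = (N j i)%:~R) /\
  (forall i j, i != j -> A' i j = -1 ->
     (forall k, k != j -> A' i k != -1) /\ (forall k, k != i -> A' k j != -1)).

Definition is_derivation (K : fieldType) (Alg : comAlgType K) (D : Alg -> Alg) : Prop :=
  (forall (c : K) (a b : Alg), D (c *: a + b) = c *: D a + D b) /\
  (forall a b : Alg, D (a * b) = a * D b + D a * b).

Definition comm (T : pzRingType) (D1 D2 : T -> T) : T -> T :=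
  fun b => D1 (D2 b) - D2 (D1 b).
Definition ad_pow (T : pzRingType) (k : nat) (X Y : T -> T) : T -> T :=
  iter k (comm X) Y.

(* basis vector H_a of h = K^(r+s) (row vectors) *)
Definition Hb (K : fieldType) (m : nat) (a : 'I_m) : 'rV[K]_m := delta_mx 0 a.
Arguments Hb {K m} a.

(* alpha_j(H), where row j of the matrix alpha holds the coordinates of
   alpha_j in the dual basis of H_1..H_(r+s) *)
Definition alphaf (K : fieldType) (r m : nat) (alpha : 'M[K]_(r, m))
    (j : 'I_r) (H : 'rV[K]_m) : K :=
  \sum_(a < m) H 0 a * alpha j a.

Definition delta_neg (K : fieldType) (Alg : comAlgType K) (r s : nat)
    (A : 'M[K]_r) (F : 'rV[K]_(r + s) -> Alg -> Alg)
    (delta : 'I_r -> Alg -> Alg) (i : 'I_r) : Alg -> Alg :=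
  fun b => (A i i)^-1 *: (- F (Hb (lshift s i)) b + (A i i)^-1 *: delta i b).

Definition Xpos (K : fieldType) (Alg : comAlgType K) (r : nat)
    (v : 'I_r -> Alg) (delta : 'I_r -> Alg -> Alg) (i : 'I_r) : Alg -> Alg :=
  fun b => v i * delta i b.
Definition Xneg (K : fieldType) (Alg : comAlgType K) (r s : nat)
    (A : 'M[K]_r) (F : 'rV[K]_(r + s) -> Alg -> Alg)
    (vinv : 'I_r -> Alg) (delta : 'I_r -> Alg -> Alg) (i : 'I_r) : Alg -> Alg :=
  fun b => vinv i * delta_neg A F delta i b.

(* Main.v *)
Require Import Defs.
From HB Require Import structures.
From mathcomp Require Import all_boot all_order all_algebra.
From mathcomp Require Import complex.
From mathcomp Require Import reals.
From mathcomp Require Import ring.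
Set Implicit Arguments. Unset Strict Implicit. Unset Printing Implicit Defensive.
Import Order.TTheory GRing.Theory Num.Theory.
Local Open Scope ring_scope.

Lemma F0 (K : fieldType) (Alg : comAlgType K) m (F : 'rV[K]_m -> Alg -> Alg)
  (hF_lin : forall (c : K) (H1 H2 : 'rV[K]_m) (b : Alg),
      F (c *: H1 + H2) b = c *: F H1 b + F H2 b) b : F 0 b = 0.
Proof.
have := hF_lin 1 0 0 b; rewrite scaler0 addr0 scale1r => h.
by apply/(addrI (F 0 b)); rewrite addr0 -h.
Qed.

Lemma FD (K : fieldType) (Alg : comAlgType K) m (F : 'rV[K]_m -> Alg -> Alg)
  (hF_lin : forall (c : K) (H1 H2 : 'rV[K]_m) (b : Alg),
      F (c *: H1 + H2) b = c *: F H1 b + F H2 b) H1 H2 b :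
  F (H1 + H2) b = F H1 b + F H2 b.
Proof. by have := hF_lin 1 H1 H2 b; rewrite !scale1r. Qed.

Lemma FZ (K : fieldType) (Alg : comAlgType K) m (F : 'rV[K]_m -> Alg -> Alg)
  (hF_lin : forall (c : K) (H1 H2 : 'rV[K]_m) (b : Alg),
      F (c *: H1 + H2) b = c *: F H1 b + F H2 b) c H b :
  F (c *: H) b = c *: F H b.
Proof. by have := hF_lin c H 0 b; rewrite addr0 F0 // addr0. Qed.

Lemma FN (K : fieldType) (Alg : comAlgType K) m (F : 'rV[K]_m -> Alg -> Alg)
  (hF_lin : forall (c : K) (H1 H2 : 'rV[K]_m) (b : Alg),
      F (c *: H1 + H2) b = c *: F H1 b + F H2 b) H b :
  F (- H) b = - F H b.
Proof. by rewrite -scaleN1r FZ // scaleN1r. Qed.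

Lemma FB (K : fieldType) (Alg : comAlgType K) m (F : 'rV[K]_m -> Alg -> Alg)
  (hF_lin : forall (c : K) (H1 H2 : 'rV[K]_m) (b : Alg),
      F (c *: H1 + H2) b = c *: F H1 b + F H2 b) H1 H2 b :
  F (H1 - H2) b = F H1 b - F H2 b.
Proof. by rewrite FD // FN. Qed.

Definition wt (K : fieldType) (Alg : comAlgType K) m (F : 'rV[K]_m -> Alg -> Alg)
  (a : Alg) (w : 'rV[K]_m -> K) := forall H, F H a = w H *: a.

Lemma wtM (K : fieldType) (Alg : comAlgType K) m (F : 'rV[K]_m -> Alg -> Alg)
  (hF_der : forall H, is_derivation (F H)) a b wa wb :
  wt F a wa -> wt F b wb -> wt F (a * b) (fun H => wa H + wb H).
Proof.
move=> ha hb H; have [_ ->] := hF_der H.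
rewrite ha hb scalerDl scalerAl scalerAr addrC. done.
Qed.

Lemma Fone (K : fieldType) (Alg : comAlgType K) m (F : 'rV[K]_m -> Alg -> Alg)
  (hF_der : forall H, is_derivation (F H)) H : F H 1 = 0.
Proof.
have [_ hm] := hF_der H; have := hm 1 1; rewrite !mul1r mulr1 => h.
by apply/(addrI (F H 1)); rewrite addr0 -h.
Qed.

Lemma wt_inv (K : fieldType) (Alg : comAlgType K) m (F : 'rV[K]_m -> Alg -> Alg)
  (hF_der : forall H, is_derivation (F H)) a b wa :
  a * b = 1 -> wt F a wa -> wt F b (fun H => - wa H).
Proof.
move=> hab ha H; have [_ hm] := hF_der H; have := hm a b.
rewrite hab Fone // ha -scalerAl hab => h.
have e : a * F H b = - (wa H *: 1) by apply/eqP; rewrite -addr_eq0 -h.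
have -> : F H b = b * (a * F H b) by rewrite mulrA (mulrC b) hab mul1r.
by rewrite e mulrN -scalerAr mulr1 scaleNr.
Qed.

Definition M (K : fieldType) (Alg : comAlgType K) m (F : 'rV[K]_m -> Alg -> Alg)
  (a : Alg) (H : 'rV[K]_m) := fun y => a * F H y.

Lemma brk (K : fieldType) (Alg : comAlgType K) m (F : 'rV[K]_m -> Alg -> Alg)
  (hF_lin : forall (c : K) (H1 H2 : 'rV[K]_m) (b : Alg),
      F (c *: H1 + H2) b = c *: F H1 b + F H2 b)
  (hF_der : forall H, is_derivation (F H))
  (hF_hom : forall H1 H2 (b : Alg), comm (F H1) (F H2) b = 0)
  a b wa wb H1 H2 : wt F a wa -> wt F b wb -> forall x,
  comm (M F a H1) (M F b H2) x = M F (a * b) (wb H1 *: H2 - wa H2 *: H1) x.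
Proof.
move=> ha hb x; rewrite /M /comm.
have [_ h1] := hF_der H1; have [_ h2] := hF_der H2.
rewrite h1 h2 ha hb FB // !FZ //.
have := hF_hom H1 H2 x; rewrite /comm => /eqP; rewrite subr_eq0 => /eqP ->.
rewrite -[wb H1 *: b]mulr_algl -[wa H2 *: a]mulr_algl -[wb H1 *: F H2 x]mulr_algl -[wa H2 *: F H1 x]mulr_algl; ring.
Qed.

Lemma comm_ext (T : pzRingType) (X X' Y Y' : T -> T) :
  X =1 X' -> Y =1 Y' -> comm X Y =1 comm X' Y'.
Proof. by move=> hX hY x; rewrite /comm !hX !hY. Qed.

Lemma ad_pow_ext (T : pzRingType) k (X X' Y Y' : T -> T) :
  X =1 X' -> Y =1 Y' -> ad_pow k X Y =1 ad_pow k X' Y'.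
Proof.
move=> hX; elim: k Y Y' => [|k IH] Y Y' hY x; first exact: hY.
by apply: comm_ext => // y; apply: IH.
Qed.

Lemma ad_powS (T : pzRingType) k (X Y : T -> T) :
  ad_pow k.+1 X Y = ad_pow k X (comm X Y).
Proof. by rewrite /ad_pow iterSr. Qed.

Lemma alphafD (K : fieldType) r m (alpha : 'M[K]_(r, m)) j H1 H2 :
  alphaf alpha j (H1 + H2) = alphaf alpha j H1 + alphaf alpha j H2.
Proof. by rewrite /alphaf -big_split; apply: eq_bigr => a _; rewrite mxE mulrDl. Qed.

Lemma alphafZ (K : fieldType) r m (alpha : 'M[K]_(r, m)) j c H :
  alphaf alpha j (c *: H) = c * alphaf alpha j H.
Proof. by rewrite /alphaf mulr_sumr; apply: eq_bigr => a _; rewrite mxE mulrA. Qed.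

Lemma alphafN (K : fieldType) r m (alpha : 'M[K]_(r, m)) j H :
  alphaf alpha j (- H) = - alphaf alpha j H.
Proof. by rewrite -scaleN1r alphafZ mulN1r. Qed.

Lemma alphafB (K : fieldType) r m (alpha : 'M[K]_(r, m)) j H1 H2 :
  alphaf alpha j (H1 - H2) = alphaf alpha j H1 - alphaf alpha j H2.
Proof. by rewrite alphafD alphafN. Qed.

Lemma alphaf0 (K : fieldType) r m (alpha : 'M[K]_(r, m)) j :
  alphaf alpha j 0 = 0.
Proof. by rewrite -(scale0r 0) alphafZ mul0r. Qed.

Lemma alphafE (K : fieldType) r m (alpha : 'M[K]_(r, m)) j H :
  alphaf alpha j H = (H *m alpha^T) 0 j.
Proof. by rewrite /alphaf mxE; apply: eq_bigr => a _; rewrite mxE. Qed.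

Lemma ad_pow_M (K : fieldType) (Alg : comAlgType K) m (F : 'rV[K]_m -> Alg -> Alg)
  (hF_lin : forall (c : K) (H1 H2 : 'rV[K]_m) (b : Alg),
      F (c *: H1 + H2) b = c *: F H1 b + F H2 b)
  (hF_der : forall H, is_derivation (F H))
  (hF_hom : forall H1 H2 (b : Alg), comm (F H1) (F H2) b = 0)
  k u w wu ww H E : wt F u wu -> wt F w ww ->
  ad_pow k.+1 (M F u H) (M F w E) =1
  ad_pow k (M F u H) (M F (u * w) (ww H *: E - wu E *: H)).
Proof.
move=> hu hw x; rewrite ad_powS; apply: ad_pow_ext => // y.
exact: brk.
Qed.

Ltac fin Fker hF_lin aHd := rewrite /= /M (Fker _ 0) ?(F0 hF_lin) ?mulr0 // => k; cbv beta;
  rewrite alphaf0 !(alphafB, alphafZ, aHd).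

Theorem theorem3p14 (R : realType) (aff : bool) (r : nat)
  (hr : ((if aff then 2 else 1) <= r)%N)
  (A : 'M[R[i]]_r)
  (hA : solution_matrix (cartan aff r) A)
  (alpha : 'M[R[i]]_(r, r + aff))
  (halpha_indep : row_free alpha)
  (halpha_N : forall i j : 'I_r,
      alphaf alpha j (Hb (lshift aff i)) = (cartan aff r i j)%:~R)
  (Alg : comAlgType R[i])
  (v vinv : 'I_r -> Alg)
  (hv_inv : forall i, v i * vinv i = 1)
  (F : 'rV[R[i]]_(r + aff) -> Alg -> Alg)
  (hF_lin : forall (c : R[i]) (H1 H2 : 'rV[R[i]]_(r + aff)) (b : Alg),
      F (c *: H1 + H2) b = c *: F H1 b + F H2 b)
  (hF_der : forall H, is_derivation (F H))
  (hF_hom : forall H1 H2 (b : Alg), comm (F H1) (F H2) b = 0)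
  (hF_ker : forall H, (forall b, F H b = 0) <-> (forall j, alphaf alpha j H = 0))
  (hF_v : forall H (i : 'I_r), F H (v i) = alphaf alpha i H *: v i) :
  let P := fun delta : 'I_r -> Alg -> Alg =>
    forall j : 'I_r, exists H : 'rV[R[i]]_(r + aff),
      (forall b, F H b = delta j b) /\ (forall i, alphaf alpha i H = A i j) in
  exists delta : 'I_r -> Alg -> Alg,
    [/\ P delta,
        (forall delta', P delta' -> forall j b, delta' j b = delta j b) &
        let Xp := Xpos v delta in
        let Xm := Xneg A F vinv delta in
        let N := cartan aff r in
        [/\ (* (a) *)
            (forall a b : 'I_(r + aff), forall x,
               comm (F (Hb a)) (F (Hb b)) x = 0),
            (* (b) *)
            (forall i x, comm (Xp i) (Xm i) x = F (Hb (lshift aff i)) x) /\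
            (forall i j, i != j -> forall x, comm (Xp i) (Xm j) x = 0),
            (* (c) *)
            (forall (a : 'I_(r + aff)) (j : 'I_r) x,
               comm (F (Hb a)) (Xp j) x = alphaf alpha j (Hb a) *: Xp j x) /\
            (forall (a : 'I_(r + aff)) (j : 'I_r) x,
               comm (F (Hb a)) (Xm j) x = - (alphaf alpha j (Hb a) *: Xm j x)),
            (* (d) *)
            (forall i j, i != j -> forall x,
               ad_pow `|1 - N i j|%N (Xp i) (Xp j) x = 0) &
            (* (e) *)
            (forall i j, i != j -> forall x,
               ad_pow `|1 - N i j|%N (Xm i) (Xm j) x = 0)]].
Proof.
move=> P.
have [hdiag [h01 [hsum hex]]] := hA.
have hfull : row_full alpha^T by rewrite /row_full mxrank_tr.
have /submxP [D hD] : (A^T <= alpha^T)%MS by apply: submx_full.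
pose Hd := fun j => row j D.
have aHd : forall i j, alphaf alpha i (Hd j) = A i j.
  by move=> i j; rewrite alphafE /Hd -row_mul -hD !mxE.
clearbody Hd.
pose delta := fun j => F (Hd j).
have Fker : forall H H' x, (forall k, alphaf alpha k H = alphaf alpha k H') ->
    F H x = F H' x.
  move=> H H' x h; apply/eqP; rewrite -subr_eq0 -FB //; apply/eqP; move: x.
  by apply/hF_ker => k; rewrite alphafB h subrr.
pose Hm := fun i => (A i i)^-1 *: (- Hb (lshift aff i) + (A i i)^-1 *: Hd i).
have dnegE : forall i y, delta_neg A F delta i y = F (Hm i) y.
  by move=> i y; rewrite /delta_neg /Hm FZ // FD // FN // FZ.
have aHm : forall i k, alphaf alpha k (Hm i) =
    (A i i)^-1 * (- (cartan aff r i k)%:~R + (A i i)^-1 * A k i).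
  by move=> i k; rewrite /Hm alphafZ alphafD alphafN alphafZ halpha_N aHd.
clearbody Hm.
have wv : forall i, wt F (v i) (alphaf alpha i) by move=> i H; exact: hF_v.
have wvi : forall i, wt F (vinv i) (fun H => - alphaf alpha i H).
  by move=> i; apply: (wt_inv hF_der (hv_inv i) (wv i)).
have w1 : wt F 1 (fun _ => 0) by move=> H; rewrite Fone // scale0r.
have N2 : forall i, cartan aff r i i = 2.
  by move=> i; rewrite /cartan; case: (aff) => /=; rewrite /cartanA1 /cartanA eqxx.
have Acase : forall i j, i != j -> A i j = 0 \/ A i j = - A j j.
  move=> i j hij; case: (h01 i j hij) => h; [left|right];
  by rewrite -[A i j](divfK (hdiag j)) h ?mul0r ?mulN1r.
have Ncase : forall i j, i != j ->
    (cartan aff r i j)%:~R = A i j / A j j + A j i / A i i :> R[i].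
  by move=> i j hij; rewrite -(hsum j i) 1?addrC // eq_sym.
exists delta; split.
- move=> j; exists (Hd j); split => // i; exact: aHd.
- move=> d' hd' j b; have [H' [h1 h2]] := hd' j; rewrite -h1; apply: Fker => k.
  by rewrite h2 aHd.
move=> Xp Xm N.
have XpE : forall i, Xp i =1 M F (v i) (Hd i) by [].
have XmE : forall i, Xm i =1 M F (vinv i) (Hm i).
  by move=> i y; rewrite /Xm /Xneg /M dnegE.
have FE : forall H, F H =1 M F 1 H by move=> H y; rewrite /M mul1r.
split.
- by move=> a b x; exact: hF_hom.
- split.
  + move=> i x; rewrite (comm_ext (XpE i) (XmE i)).
    rewrite (brk hF_lin hF_der hF_hom _ _ (wv i) (wvi i)) /M hv_inv mul1r.
    apply: Fker => k; cbv beta.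
    rewrite !alphafB !alphafZ !aHm !aHd N2 halpha_N.
    field; apply: hdiag.
  + move=> i j hij x; rewrite (comm_ext (XpE i) (XmE j)).
    rewrite (brk hF_lin hF_der hF_hom _ _ (wv i) (wvi j)) /M.
    rewrite (Fker _ 0) ?(F0 hF_lin) ?mulr0 // => k; cbv beta.
    rewrite alphaf0 !(alphafB, alphafZ, aHd) !aHm.
    have hji : j != i by rewrite eq_sym.
    have hi := hdiag i; have hj := hdiag j.
    case: (Acase j i hji) => eji.
      by rewrite (Ncase j i hji) eji; field; rewrite ?hi ?hj.
    have a'ji : A j i / A i i = -1 by rewrite eji mulNr divff.
    have [hrow hcol] := hex j i hji a'ji.
    case: (eqVneq k i) => [->|hki].
      by rewrite (Ncase j i hji) eji; field; rewrite ?hi ?hj.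
    case: (eqVneq k j) => [->|hkj].
      by rewrite N2 (Ncase j i hji) eji; field; rewrite ?hi ?hj.
    have hk := hdiag k.
    have eki : A k i = 0.
      case: (Acase k i hki) => // e; have := hcol k hkj.
      by rewrite e mulNr divff // eqxx.
    have hjk : j != k by rewrite eq_sym.
    have ejk : A j k = 0.
      case: (Acase j k hjk) => // e; have := hrow k hki.
      by rewrite e mulNr divff // eqxx.
    by rewrite (Ncase j k hjk) eki ejk; field; rewrite ?hi ?hj ?hk.
- split.
  + move=> a j x; rewrite (comm_ext (FE (Hb a)) (XpE j)).
    rewrite (brk hF_lin hF_der hF_hom _ _ w1 (wv j)) /M XpE /M; cbv beta.
    rewrite FB // !FZ // scale0r subr0 mul1r; symmetry; apply: scalerAr.
  + move=> a j x; rewrite (comm_ext (FE (Hb a)) (XmE j)) (XmE j x).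
    rewrite (brk hF_lin hF_der hF_hom _ _ w1 (wvi j)) /M; cbv beta.
    rewrite FB // !FZ // scale0r subr0 mul1r scaleNr mulrN; congr (- _); symmetry; apply: scalerAr.
- move=> i j hij x; rewrite /N.
  have hji : j != i by rewrite eq_sym.
  have hi := hdiag i; have hj := hdiag j.
  case: (Acase i j hij) => eij; case: (Acase j i hji) => eji.
  + have -> : cartan aff r i j = 0.
      by apply: (@intr_inj R[i]); rewrite Ncase // eij eji; field; rewrite ?hi ?hj.
    rewrite (ad_pow_ext 1 (XpE i) (XpE j) x).
    rewrite (ad_pow_M hF_lin hF_der hF_hom 0 _ _ (wv i) (wv j)).
    fin Fker hF_lin aHd. rewrite eij eji; ring.
  + have -> : cartan aff r i j = -1.
      by apply: (@intr_inj R[i]); rewrite Ncase // eij eji; field; rewrite ?hi ?hj.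
    rewrite (ad_pow_ext 2 (XpE i) (XpE j) x).
    rewrite (ad_pow_M hF_lin hF_der hF_hom 1 _ _ (wv i) (wv j)).
    rewrite (ad_pow_M hF_lin hF_der hF_hom 0 _ _ (wv i) (wtM hF_der (wv i) (wv j))).
    fin Fker hF_lin aHd. rewrite eij eji; ring.
  + have -> : cartan aff r i j = -1.
      by apply: (@intr_inj R[i]); rewrite Ncase // eij eji; field; rewrite ?hi ?hj.
    rewrite (ad_pow_ext 2 (XpE i) (XpE j) x).
    rewrite (ad_pow_M hF_lin hF_der hF_hom 1 _ _ (wv i) (wv j)).
    rewrite (ad_pow_M hF_lin hF_der hF_hom 0 _ _ (wv i) (wtM hF_der (wv i) (wv j))).
    fin Fker hF_lin aHd. rewrite eij eji; ring.
  + have -> : cartan aff r i j = -2.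
      by apply: (@intr_inj R[i]); rewrite Ncase // eij eji; field; rewrite ?hi ?hj.
    rewrite (ad_pow_ext 3 (XpE i) (XpE j) x).
    rewrite (ad_pow_M hF_lin hF_der hF_hom 2 _ _ (wv i) (wv j)).
    rewrite (ad_pow_M hF_lin hF_der hF_hom 1 _ _ (wv i) (wtM hF_der (wv i) (wv j))).
    rewrite (ad_pow_M hF_lin hF_der hF_hom 0 _ _ (wv i)
      (wtM hF_der (wv i) (wtM hF_der (wv i) (wv j)))).
    fin Fker hF_lin aHd. rewrite eij eji; ring.
- move=> i j hij x; rewrite /N.
  have hji : j != i by rewrite eq_sym.
  have hi := hdiag i; have hj := hdiag j.
  case: (Acase i j hij) => eij; case: (Acase j i hji) => eji.
  + have -> : cartan aff r i j = 0.
      by apply: (@intr_inj R[i]); rewrite Ncase // eij eji; field; rewrite ?hi ?hj.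
    rewrite (ad_pow_ext 1 (XmE i) (XmE j) x).
    rewrite (ad_pow_M hF_lin hF_der hF_hom 0 _ _ (wvi i) (wvi j)).
    fin Fker hF_lin aHd. rewrite !aHm ?N2 ?(Ncase i j hij) ?(Ncase j i hji) eij eji; by field; rewrite ?hi ?hj.
  + have -> : cartan aff r i j = -1.
      by apply: (@intr_inj R[i]); rewrite Ncase // eij eji; field; rewrite ?hi ?hj.
    rewrite (ad_pow_ext 2 (XmE i) (XmE j) x).
    rewrite (ad_pow_M hF_lin hF_der hF_hom 1 _ _ (wvi i) (wvi j)).
    rewrite (ad_pow_M hF_lin hF_der hF_hom 0 _ _ (wvi i) (wtM hF_der (wvi i) (wvi j))).
    fin Fker hF_lin aHd. rewrite !aHm ?N2 ?(Ncase i j hij) ?(Ncase j i hji) eij eji; by field; rewrite ?hi ?hj.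
  + have -> : cartan aff r i j = -1.
      by apply: (@intr_inj R[i]); rewrite Ncase // eij eji; field; rewrite ?hi ?hj.
    rewrite (ad_pow_ext 2 (XmE i) (XmE j) x).
    rewrite (ad_pow_M hF_lin hF_der hF_hom 1 _ _ (wvi i) (wvi j)).
    rewrite (ad_pow_M hF_lin hF_der hF_hom 0 _ _ (wvi i) (wtM hF_der (wvi i) (wvi j))).
    fin Fker hF_lin aHd. rewrite !aHm ?N2 ?(Ncase i j hij) ?(Ncase j i hji) eij eji; by field; rewrite ?hi ?hj.
  + have -> : cartan aff r i j = -2.
      by apply: (@intr_inj R[i]); rewrite Ncase // eij eji; field; rewrite ?hi ?hj.
    rewrite (ad_pow_ext 3 (XmE i) (XmE j) x).
    rewrite (ad_pow_M hF_lin hF_der hF_hom 2 _ _ (wvi i) (wvi j)).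
    rewrite (ad_pow_M hF_lin hF_der hF_hom 1 _ _ (wvi i) (wtM hF_der (wvi i) (wvi j))).
    rewrite (ad_pow_M hF_lin hF_der hF_hom 0 _ _ (wvi i)
      (wtM hF_der (wvi i) (wtM hF_der (wvi i) (wvi j)))).
    fin Fker hF_lin aHd. rewrite !aHm ?N2 ?(Ncase i j hij) ?(Ncase j i hji) eij eji; by field; rewrite ?hi ?hj.
Qed.
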